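(* The distributive law $\zeta\colon T(\partial)\otimes_{\mathbb K}T(\chi)\to T(\chi)\otimes_{\mathbb K}T(\partial)$ descends to distributive laws of $\mathbb K$-algebras $\mathrm{Mag}\otimes_{\mathbb K}\mathrm{Braid}\to\mathrm{Braid}\otimes_{\mathbb K}\mathrm{Mag}$, $\mathrm{Simp}\otimes_{\mathbb K}\mathrm{Braid}\to\mathrm{Braid}\otimes_{\mathbb K}\mathrm{Simp}$, $\mathrm{Mag}\otimes_{\mathbb K}\mathrm{Sym}\to\mathrm{Sym}\otimes_{\mathbb K}\mathrm{Mag}$ and $\mathrm{Simp}\otimes_{\mathbb K}\mathrm{Sym}\to\mathrm{Sym}\otimes_{\mathbb K}\mathrm{Simp}$.
   Context: Let $\Bbbk$ be a field and $\mathbb{K}=\bigoplus_{n\in\mathbb N}\Bbbk1_n$ with $1_n1_m=\delta_{nm}1_n$. A faithful $\mathbb K$-bimodule is $V=\bigoplus_{n,m}V_{n,m}$ with $1_nx1_m=x$ for $x\in V_{n,m}$; $(V\otimes_{\mathbb K}W)_{n,\ell}=\bigoplus_mV_{n,m}\otimes W_{m,\ell}$. A $\mathbb K$-algebra is a faithful $\mathbb K$-bimodule with associative multiplication and unit $\mathbb K\to V$; $T(V)$ denotes the free $\mathbb K$-algebra. $\partial$ has basis $\partial^n_j\in\partial_{n+1,n}$ ($n\ge0$, $0\le j\le n$), $\chi$ has basis $\chi^n_i\in\chi_{n,n}$ ($n\ge1$, $0\le i\le n-1$). $\mathrm{Mag}=T(\partial)/\langle\partial^{n+1}_i\partial^n_j-\partial^{n+1}_{j+1}\partial^n_i:0\le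 i<j\le n\rangle$; $\mathrm{Simp}=T(\partial)/\langle\partial^{n+1}_i\partial^n_j-\partial^{n+1}_{j+1}\partial^n_i:0\le i\le j\le n\rangle$; $\mathrm{Braid}=T(\chi)/\langle\chi^n_i\chi^n_j-\chi^n_j\chi^n_i\ (|i-j|\ge2),\ \chi^n_i\chi^n_{i+1}\chi^n_i-\chi^n_{i+1}\chi^n_i\chi^n_{i+1}\ (0\le i\le n-2)\rangle$; $\mathrm{Sym}=\mathrm{Braid}/\langle\chi^n_i\chi^n_i-1_n\rangle$. A $\mathbb K$-bimodule map $\omega\colon\mathcal B\otimes_{\mathbb K}\mathcal A\to\mathcal A\otimes_{\mathbb K}\mathcal B$ between $\mathbb K$-algebras is a distributive law if $\omega(\mu_{\mathcal B}\otimes\mathcal A)=(\mathcal A\otimes\mu_{\mathcal B})(\omega\otimes\mathcal B)(\mathcal B\otimes\omega)$, $\omega(\mathcal B\otimes\mu_{\mathcal A})=(\mu_{\mathcal A}\otimes\mathcal B)(\mathcal A\otimes\omega)(\omega\otimes\mathcal A)$, $\omega(b\otimes1)=1\otimes b$, $\omega(1\otimes a)=a\otimes1$. $\zeta$ is the distributive law of free $\mathbb K$-algebras defined on generators by $\zeta(\partial_i^n\otimes\chi_j^n)=\chi^{n+1}_{j+1}\otimes\partial^n_i$ if $i<j$; $\chi^{n+1}_{i+1}\chi^{n+1}_i\otimes\partial^n_{i+1}$ if $i=j$; $\chi^{n+1}_{i-1}\chi^{n+1}_i\otimes\partial^n_{i-1}$ if $i=j+1$; $\chi^{n+1}_j\otimes\partial^n_i$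 if $i>j+1$, extended to words by successive application. ''Descends'' means $\zeta$ induces a well-defined map between the quotient bimodules which is a distributive law. *)

(* Defs.v *)
From HB Require Import structures.
From mathcomp Require Import all_boot all_order all_algebra.
From mathcomp Require Import finmap.
From mathcomp.multinomials Require Import monalg.
Set Implicit Arguments. Unset Strict Implicit. Unset Printing Implicit Defensive.
Import GRing.Theory.
Local Open Scope ring_scope.

(* Words.  A word is a pair (m, s) : nat * seq nat.                     *)
(*  - in T(partial): (m, [:: j_1; ...; j_r]) is the path                *)
(*      partial^{m+r-1}_{j_1} ... partial^{m}_{j_r}  in T_{m+r, m};      *)
(*      (m, [::]) is 1_m.                                               *)
(*  - in T(chi): (n, [:: i_1; ...; i_r]) is chi^n_{i_1} ... chi^n_{i_r}  *)
(*      in T_{n,n}; (n, [::]) is 1_n.                                   *)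
(* In both cases the source (right index) is w.1 and the product of     *)
(* composable words x y (src x = tgt y) is (y.1, x.2 ++ y.2).           *)
Definition word := (nat * seq nat)%type.

Definition wcat (x y : word) : word := (y.1, x.2 ++ y.2).

(* A K-algebra presented as T(V)/<p - q : (p,q) relation>, given by the  *)
(* validity predicate of words of T(V), the target index of words, and  *)
(* the (binomial) relations.                                            *)
Record pres := Pres {
  pvalid : word -> bool;
  ptgt : word -> nat;
  prel : word -> word -> Prop
}.

Fixpoint dvalid_s (m : nat) (s : seq nat) : bool :=
  match s with
  | [::] => true
  | j :: s' => (j <= m + size s')%N && dvalid_s m s'
  end.
Definition dvalid (w : word) : bool := dvalid_s w.1 w.2.
Definition dtgt (w : word) : nat := (w.1 + size w.2)%N.

Definition cvalid (w : word) : bool := all (fun i => i < w.1)%N w.2.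
Definition ctgt (w : word) : nat := w.1.

Definition mag_rel (p q : word) : Prop :=
  exists n i j, (i < j <= n)%N /\ p = (n, [:: i; j]) /\ q = (n, [:: j.+1; i]).
Definition simp_rel (p q : word) : Prop :=
  exists n i j, (i <= j <= n)%N /\ p = (n, [:: i; j]) /\ q = (n, [:: j.+1; i]).
Definition braid_rel (p q : word) : Prop :=
  (exists n i j, (i < n)%N /\ (j < n)%N /\ (2 <= `|i - j|)%N /\
       p = (n, [:: i; j]) /\ q = (n, [:: j; i]))
  \/ (exists n i, (i.+1 < n)%N /\
       p = (n, [:: i; i.+1; i]) /\ q = (n, [:: i.+1; i; i.+1])).
Definition sym_rel (p q : word) : Prop :=
  braid_rel p q \/ (exists n i, (i < n)%N /\ p = (n, [:: i; i]) /\ q = (n, [::])).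

Definition Mag := Pres dvalid dtgt mag_rel.
Definition Simp := Pres dvalid dtgt simp_rel.
Definition Braid := Pres cvalid ctgt braid_rel.
Definition Sym := Pres cvalid ctgt sym_rel.

(* The map zeta on basis tensors (word of T(partial)) (x) (word of T(chi)), *)
(* extended to words by successive application.                        *)
Definition zeta1 (i j : nat) : seq nat * nat :=
  if (i < j)%N then ([:: j.+1], i)
  else if i == j then ([:: i.+1; i], i.+1)
  else if i == j.+1 then ([:: i.-1; i], i.-1)
  else ([:: j], i).

(* one letter partial_i past a chi-word (leftmost chi letter first) *)
Fixpoint zetaL (i : nat) (t : seq nat) : seq nat * nat :=
  match t with
  | [::] => ([::], i)
  | j :: t' => let: (u, i1) := zeta1 i j in
               let: (u', i2) := zetaL i1 t' in (u ++ u', i2)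
  end.

(* a partial-word, given reversed (rightmost letter first), past a chi-word *)
Fixpoint zetaR (rs t : seq nat) : seq nat * seq nat :=
  match rs with
  | [::] => (t, [::])
  | i :: rs' => let: (t1, i1) := zetaL i t in
                let: (t2, s2) := zetaR rs' t1 in (t2, rcons s2 i1)
  end.

Definition zetab (p : word * word) : word * word :=
  let: ((m, s), (_, t)) := p in
  let: (t', s') := zetaR (rev s) t in ((m + size s, t'), (m, s')).

Section Lin.
Variable k : fieldType.

Inductive span {V : lmodType k} (S : V -> Prop) : V -> Prop :=
| span0 : span S 0
| spanS (c : k) (s v : V) : S s -> span S v -> span S (c *: s + v).

Definition lin {X Y : choiceType} (f : X -> Y) (p : {malg k[X]}) : {malg k[Y]} :=
  \sum_(x <- msupp p) << p@_x *g f x >>.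

(* bilinear extension of a partial map of bases (None = product is 0) *)
Definition bil {X Y Z : choiceType} (f : X -> Y -> option Z)
    (p : {malg k[X]}) (q : {malg k[Y]}) : {malg k[Z]} :=
  \sum_(x <- msupp p) \sum_(y <- msupp q)
     oapp (fun z => << p@_x * q@_y *g z >>) 0 (f x y).

Definition vec := malg word k.
Definition vec2 := malg (word * word)%type k.
Definition vec3 := malg ((word * word) * word)%type k.

Definition vvalid (P : pres) (v : vec) : Prop :=
  forall x, x \in msupp v -> pvalid P x.

Definition amul (P : pres) (a b : vec) : vec :=
  bil (fun x y => if x.1 == ptgt P y then Some (wcat x y) else None) a b.

Definition ideal (P : pres) : vec -> Prop :=
  span (fun r => exists (u v : vec) p q, vvalid P u /\ vvalid P v /\
          pvalid P p /\ pvalid P q /\ prel P p q /\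
          r = amul P (amul P u (<< p >> - << q >>)) v).

(* tensor products over K = (+)_n k 1_n *)
Definition tprod (P Q : pres) (a b : vec) : vec2 :=
  bil (fun x y => if x.1 == ptgt Q y then Some (x, y) else None) a b.
Definition tprod3 (P Q R : pres) (a b c : vec) : vec3 :=
  bil (fun xy z => if xy.2.1 == ptgt R z then Some (xy, z) else None)
      (tprod P Q a b) c.

Definition tens3 (P Q R : pres) : vec3 -> Prop :=
  span (fun t => exists a b c, vvalid P a /\ vvalid Q b /\ vvalid R c /\
          t = tprod3 P Q R a b c).

(* kernel of T(V) (x)_K T(W) -> (T(V)/I_P) (x)_K (T(W)/I_Q) *)
Definition ker2 (P Q : pres) : vec2 -> Prop :=
  span (fun t => exists a b,
          ((ideal P a /\ vvalid Q b) \/ (vvalid P a /\ ideal Q b)) /\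
          t = tprod P Q a b).

Definition zeta (x : vec2) : vec2 := lin zetab x.

Definition mul_l (t : (word * word) * word) : word * word :=
  let: ((x, y), z) := t in (wcat x y, z).
Definition mul_r (t : (word * word) * word) : word * word :=
  let: ((x, y), z) := t in (x, wcat y z).
Definition zeta_l (t : (word * word) * word) : (word * word) * word :=
  let: ((x, y), z) := t in (zetab (x, y), z).
Definition zeta_r (t : (word * word) * word) : (word * word) * word :=
  let: ((x, y), z) := t in let: (y', z') := zetab (y, z) in ((x, y'), z').

(* zeta descends to a map (T(partial)/I_B) (x) (T(chi)/I_A) ->           *)
(* (T(chi)/I_A) (x) (T(partial)/I_B) which is a distributive law; the   *)
(* induced maps on quotients are described through representatives,     *)
(* equalities in the quotient A (x) B being congruences mod ker2 A B.   *)
Definition descends (B A : pres) : Prop :=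
  (forall x : vec2, ker2 B A x -> ker2 A B (zeta x)) /\
  (forall x : vec3, tens3 B B A x ->
     ker2 A B (zeta (lin mul_l x) - lin mul_r (lin zeta_l (lin zeta_r x)))) /\
  (forall x : vec3, tens3 B A A x ->
     ker2 A B (zeta (lin mul_r x) - lin mul_l (lin zeta_r (lin zeta_l x)))) /\
  (forall b : vec, vvalid B b ->
     ker2 A B (zeta (lin (fun x : word => (x, (x.1, [::]) : word)) b)
               - lin (fun x : word => ((ptgt B x, [::]) : word, x)) b)) /\
  (forall a : vec, vvalid A a ->
     ker2 A B (zeta (lin (fun y : word => ((ptgt A y, [::]) : word, y)) a)
               - lin (fun y : word => (y, (y.1, [::]) : word)) a)).

End Lin.

(* Main.v *)
Require Import Defs.
Set Warnings "-notation-overridden,-ambiguous-paths,-notation-incompatible-prefix".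
From HB Require Import structures.
From mathcomp Require Import all_boot all_order all_algebra.
From mathcomp Require Import finmap.
From mathcomp.multinomials Require Import monalg.
From mathcomp Require Import zify.
Set Implicit Arguments. Unset Strict Implicit. Unset Printing Implicit Defensive.
Import Defs.
Notation allb n t := (all (fun x => x < n) t).
Section Comb.
Local Open Scope nat_scope.

Variant zeta1_spec (i j : nat) : seq nat * nat -> Type :=
| Z1lt of i < j : zeta1_spec i j ([:: j.+1], i)
| Z1eq of i = j : zeta1_spec i j ([:: j.+1; j], j.+1)
| Z1s of i = j.+1 : zeta1_spec i j ([:: j; j.+1], j)
| Z1gt of j.+1 < i : zeta1_spec i j ([:: j], i).

Lemma zeta1P i j : zeta1_spec i j (zeta1 i j).
Proof.
rewrite /zeta1; case: ltnP => h1; first by constructor.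
case: eqP => h2; first by subst; constructor.
case: eqP => h3; first by subst; constructor.
constructor; lia.
Qed.

Definition cr (b : bool) (n : nat) (r r' : seq nat) : Prop :=
  (exists x y, r = [:: x; y] /\ r' = [:: y; x] /\ x < n /\ y < n /\ (x.+2 <= y \/ y.+2 <= x))
  \/ (exists x, r = [:: x; x.+1; x] /\ r' = [:: x.+1; x; x.+1] /\ x.+1 < n)
  \/ (b /\ exists x, r = [:: x; x] /\ r' = [::] /\ x < n).

Inductive ceqv (b : bool) (n : nat) : seq nat -> seq nat -> Prop :=
| crefl t : ceqv b n t t
| cstep a c r r' : all (fun x => x < n) a -> all (fun x => x < n) c ->
    cr b n r r' -> ceqv b n (a ++ r ++ c) (a ++ r' ++ c)
| csym t t' : ceqv b n t t' -> ceqv b n t' t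
| ctrans t t' t'' : ceqv b n t t' -> ceqv b n t' t'' -> ceqv b n t t''.

Definition swap2 k (w : seq nat) :=
  take k w ++ [:: nth 0 w k.+1; nth 0 w k] ++ drop k.+2 w.
Definition braid3 k (w : seq nat) :=
  take k w ++ [:: nth 0 w k.+1; nth 0 w k; nth 0 w k.+1] ++ drop k.+3 w.
Definition canc k (w : seq nat) := take k w ++ drop k.+2 w.

Lemma all_take_drop (P : pred nat) k w : all P w -> all P (take k w) && all P (drop k w).
Proof. by rewrite -all_cat cat_take_drop. Qed.

Lemma take_drop2 k (w : seq nat) : k.+1 < size w ->
  w = take k w ++ [:: nth 0 w k; nth 0 w k.+1] ++ drop k.+2 w.
Proof.
move=> h; rewrite -{1}(cat_take_drop k w); congr (_ ++ _).
rewrite (drop_nth 0) ?(ltnW h) //  (drop_nth 0) //.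
Qed.

Lemma take_drop3 k (w : seq nat) : k.+2 < size w ->
  w = take k w ++ [:: nth 0 w k; nth 0 w k.+1; nth 0 w k.+2] ++ drop k.+3 w.
Proof.
move=> h; rewrite -{1}(cat_take_drop k w); congr (_ ++ _).
rewrite (drop_nth 0) ?(ltnW (ltnW h)) //  (drop_nth 0) ?(ltnW h) // (drop_nth 0) //.
Qed.

Lemma ceqv_swap b n k w : all (fun x => x < n) w -> k.+1 < size w ->
  (nth 0 w k).+2 <= nth 0 w k.+1 \/ (nth 0 w k.+1).+2 <= nth 0 w k ->
  ceqv b n w (swap2 k w).
Proof.
move=> hw hk hd; have := hw; rewrite {1}(take_drop2 hk) !all_cat /=;
move=> /and3P[h1 /and3P[hm1 hm2 _] h2].
rewrite /swap2 {1}(take_drop2 hk).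
by apply: cstep => //; left; exists (nth 0 w k), (nth 0 w k.+1).
Qed.

Lemma ceqv_braid b n k w : all (fun x => x < n) w -> k.+2 < size w ->
  nth 0 w k = nth 0 w k.+2 ->
  nth 0 w k.+1 = (nth 0 w k).+1 \/ nth 0 w k = (nth 0 w k.+1).+1 ->
  ceqv b n w (braid3 k w).
Proof.
move=> hw hk he hd; have := hw; rewrite {1}(take_drop3 hk) !all_cat /=;
move=> /and3P[h1 /and4P[hl' hl _ _] h2].
rewrite /braid3 {1}(take_drop3 hk).
case: hd => hd.
  apply: cstep => //; right; left; exists (nth 0 w k); rewrite -he hd; do !split => //.
  by rewrite -hd.
apply: csym; apply: cstep => //; right; left; exists (nth 0 w k.+1); rewrite -he hd; do !split => //.
by rewrite -hd.
Qed.

Lemma ceqv_canc n k w : all (fun x => x < n) w -> k.+1 < size w ->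
  nth 0 w k = nth 0 w k.+1 -> ceqv true n w (canc k w).
Proof.
move=> hw hk he; have := hw; rewrite {1}(take_drop2 hk) !all_cat /=;
move=> /and3P[h1 /and3P[hl' _ _] h2].
rewrite /canc {1}(take_drop2 hk).
have -> : take k w ++ drop k.+2 w = take k w ++ [::] ++ drop k.+2 w by [].
apply: cstep => //; right; right; split => //; exists (nth 0 w k); rewrite -he; do !split => //.
Qed.

Lemma ceqv_eq b n t t' : t = t' -> ceqv b n t t'.
Proof. by move=> ->; apply: crefl. Qed.

End Comb.

Lemma ceqv_swap_tr b n k w t : all (fun x => x < n) w -> k.+1 < size w ->
  (nth 0 w k).+2 <= nth 0 w k.+1 \/ (nth 0 w k.+1).+2 <= nth 0 w k ->
  ceqv b n (swap2 k w) t -> ceqv b n w t.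
Proof. by move=> h1 h2 h3; apply: ctrans; apply: ceqv_swap. Qed.
Lemma ceqv_braid_tr b n k w t : all (fun x => x < n) w -> k.+2 < size w ->
  nth 0 w k = nth 0 w k.+2 ->
  nth 0 w k.+1 = (nth 0 w k).+1 \/ nth 0 w k = (nth 0 w k.+1).+1 ->
  ceqv b n (braid3 k w) t -> ceqv b n w t.
Proof. by move=> h1 h2 h3 h4; apply: ctrans; apply: ceqv_braid. Qed.
Lemma ceqv_canc_tr n k w t : all (fun x => x < n) w -> k.+1 < size w ->
  nth 0 w k = nth 0 w k.+1 -> ceqv true n (canc k w) t -> ceqv true n w t.
Proof. by move=> h1 h2 h3; apply: ctrans; apply: ceqv_canc. Qed.

Ltac list_eq := repeat (first [reflexivity | f_equal]); lia.
Ltac allv := rewrite /= ?andbT; repeat (apply/andP; split); lia.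

Ltac cstep0 := apply: ceqv_eq; list_eq.
Ltac cmove k :=
  (apply: (ceqv_swap_tr (k:=k)); [allv | done | simpl; lia | simpl])
  + (apply: (ceqv_braid_tr (k:=k)); [allv | done | simpl; lia | simpl; lia | simpl])
  + (apply: (ceqv_canc_tr (k:=k)); [allv | done | simpl; lia | simpl]).
Ltac cmv := cmove 0 + cmove 1 + cmove 2 + cmove 3 + cmove 4.
Ltac csolve1 := cstep0 + (cmv; cstep0).
Ltac csolve2 := csolve1 + (cmv; csolve1).
Ltac csolve3 := csolve2 + (cmv; csolve2).
Ltac csolve4 := csolve3 + (cmv; csolve3).
Section C1.
Local Open Scope nat_scope.

Ltac z1 := match goal with |- context [zeta1 ?x ?y] =>
  case: (zeta1P x y) => ?; try (exfalso; lia) end.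

Lemma C1_comm b n i x y : i <= n -> x < n -> y < n -> (x.+2 <= y \/ y.+2 <= x) ->
  (zetaL i [:: x; y]).2 = (zetaL i [:: y; x]).2 /\
  ceqv b n.+1 (zetaL i [:: x; y]).1 (zetaL i [:: y; x]).1.
Proof.
move=> hi hx hy hd /=.
repeat z1; simpl; (split; [simpl; lia | simpl; once csolve2]).
Qed.

Lemma C1_braid b n i x : i <= n -> x.+1 < n ->
  (zetaL i [:: x; x.+1; x]).2 = (zetaL i [:: x.+1; x; x.+1]).2 /\
  ceqv b n.+1 (zetaL i [:: x; x.+1; x]).1 (zetaL i [:: x.+1; x; x.+1]).1.
Proof.
move=> hi hx /=.
repeat z1; simpl; (split; [simpl; lia | simpl; once csolve4]).
Qed.

Lemma C1_canc n i x : i <= n -> x < n ->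
  (zetaL i [:: x; x]).2 = (zetaL i [::]).2 /\
  ceqv true n.+1 (zetaL i [:: x; x]).1 (zetaL i [::]).1.
Proof.
move=> hi hx /=.
repeat z1; simpl; (split; [simpl; lia | simpl; once csolve2]).
Qed.

End C1.
Section C2.
Local Open Scope nat_scope.

Definition dr (b : bool) (N : nat) (p q : seq nat) : Prop :=
  exists x y, p = [:: x; y] /\ q = [:: y.+1; x] /\ (if b then x <= y else x < y) /\ y <= N.
Definition rel2 b N (p q : seq nat) := p = q \/ dr b N p q \/ dr b N q p.

Ltac z1 := match goal with |- context [zeta1 ?x ?y] =>
  case: (zeta1P x y) => ? /=; try (exfalso; lia) end.
Ltac r2 := first [left; list_eq
  | right; left; do 2 eexists; split; [reflexivity | split; [list_eq | split; lia]]
  | right; right; do 2 eexists; split; [reflexivity | split; [list_eq | split; lia]]].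

Lemma C2 b N p q k : dr b N p q -> k < N ->
  ceqv false N.+2 (zetaR (rev p) [:: k]).1 (zetaR (rev q) [:: k]).1 /\
  rel2 b N (zetaR (rev p) [:: k]).2 (zetaR (rev q) [:: k]).2.
Proof.
case=> i [j [-> [-> [hij hj]]]] hk; case: b hij => hij /=;
rewrite /rev /=; repeat z1; simpl; (split; [once csolve1 | r2]).
Qed.

End C2.
Section ZetaProps.
Local Open Scope nat_scope.

Lemma C1all b n i r r' : i <= n -> cr b n r r' ->
  (zetaL i r).2 = (zetaL i r').2 /\ ceqv b n.+1 (zetaL i r).1 (zetaL i r').1.
Proof.
move=> hi [[x [y [-> [-> [hx [hy hd]]]]]]|[[x [-> [-> hx]]]|[hb [x [-> [-> hx]]]]]].
- exact: C1_comm.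
- exact: C1_braid.
- by move: hb; case: b => // _; apply: C1_canc.
Qed.

Lemma zetaL_cat i a c :
  zetaL i (a ++ c) = ((zetaL i a).1 ++ (zetaL (zetaL i a).2 c).1, (zetaL (zetaL i a).2 c).2).
Proof.
elim: a i => [|j a IH] i /=; first by case: zetaL.
case: zeta1 => u i1; rewrite IH; case: (zetaL i1 a) => u1 i2 /=.
by case: zetaL => u2 i3 /=; rewrite catA.
Qed.

Lemma zetaR_cons i rs t : zetaR (i :: rs) t =
  ((zetaR rs (zetaL i t).1).1, rcons (zetaR rs (zetaL i t).1).2 (zetaL i t).2).
Proof. by rewrite /=; case: zetaL => u i1; case: zetaR. Qed.

Lemma zetaR_catd a c t :
  zetaR (a ++ c) t = ((zetaR c (zetaR a t).1).1, (zetaR c (zetaR a t).1).2 ++ (zetaR a t).2).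
Proof.
elim: a t => [|i a IH] t /=; first by case: zetaR => ? ?; rewrite cats0.
case: zetaL => u i1; rewrite IH; case: (zetaR a u) => t1 s1 /=.
by case: zetaR => t2 s2 /=; rewrite rcons_cat.
Qed.

Lemma zetaR_catc rs a c :
  zetaR rs (a ++ c) = ((zetaR rs a).1 ++ (zetaR (rev (zetaR rs a).2) c).1,
                       (zetaR (rev (zetaR rs a).2) c).2).
Proof.
elim: rs a c => [|i rs IH] a c /=; first by rewrite /=.
rewrite zetaL_cat; case: (zetaL i a) => u1 i1 /=.
rewrite IH; case: (zetaR rs u1) => T1 S1 /=.
rewrite rev_rcons /=; case: (zetaL i1 c) => u2 i2 /=.
by case: (zetaR (rev S1) u2).
Qed.


Lemma dvalid_s_cat m a c : dvalid_s m (a ++ c) = dvalid_s (m + size c) a && dvalid_s m c.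
Proof.
elim: a => [|j a IH] //=; rewrite IH andbA size_cat; congr (_ && _); congr (_ && _).
by rewrite addnAC addnA.
Qed.

Lemma dvalid_s_rcons m s i : dvalid_s m (rcons s i) = (i <= m) && dvalid_s m.+1 s.
Proof. by rewrite -cats1 dvalid_s_cat /= addn1 addn0 andbT andbC. Qed.

Lemma zetaL_valid n i t : i <= n -> allb n t ->
  allb n.+1 (zetaL i t).1 /\ (zetaL i t).2 <= n.
Proof.
elim: t i => [|j t IH] i hi //= /andP[hj ht].
case: zeta1P => h /=;
 [move: (IH i hi ht) | move: (IH j.+1 ltac:(lia) ht) | move: (IH j ltac:(lia) ht) | move: (IH i hi ht)];
 case: zetaL => u i2 /= [h1 h2]; rewrite h1 ?andbT; split => //; try (apply/andP; split); lia.
Qed.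

Lemma zetaR_valid m rs t : dvalid_s m (rev rs) -> allb m t ->
  allb (m + size rs) (zetaR rs t).1 /\ dvalid_s m (zetaR rs t).2 /\
  size (zetaR rs t).2 = size rs.
Proof.
elim: rs m t => [|i rs IH] m t /=; first by rewrite addn0.
rewrite rev_cons dvalid_s_rcons => /andP[hi hrs] ht.
have [h1 h2] := zetaL_valid hi ht.
case: zetaL h1 h2 => u i1 /= h1 h2.
have [h3 [h4 h5]] := IH _ _ hrs h1.
case: zetaR h3 h4 h5 => T S /= h3 h4 h5.
by rewrite dvalid_s_rcons size_rcons h2 h4 h5 addnS -addSn.
Qed.

Lemma ceqv_ctx b n l r t t' : ceqv b n t t' -> allb n l -> allb n r ->
  ceqv b n (l ++ t ++ r) (l ++ t' ++ r).
Proof.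
move=> H hl hr; elim: H => {t t'}.
- by move=> t; apply: crefl.
- move=> a c r0 r0' ha hc hrr.
  have -> : l ++ (a ++ r0 ++ c) ++ r = (l ++ a) ++ r0 ++ (c ++ r) by rewrite !catA.
  have -> : l ++ (a ++ r0' ++ c) ++ r = (l ++ a) ++ r0' ++ (c ++ r) by rewrite !catA.
  by apply: cstep => //; rewrite all_cat ?hl ?ha ?hc ?hr.
- by move=> t t' _ IH; apply: csym.
- by move=> t t' t'' _ IH1 _ IH2; apply: ctrans IH2.
Qed.

Lemma ceqv_cat b n x x' y y' : ceqv b n x x' -> ceqv b n y y' -> allb n x' -> allb n y ->
  ceqv b n (x ++ y) (x' ++ y').
Proof.
move=> h1 h2 hx hy; apply: (@ctrans _ _ _ (x' ++ y)).
  exact: (ceqv_ctx h1 (isT : allb n [::]) hy).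
by have := ceqv_ctx h2 hx (isT : allb n [::]); rewrite !cats0.
Qed.

Lemma ceqv_mono b n t t' : ceqv false n t t' -> ceqv b n t t'.
Proof.
elim => {t t'}.
- by move=> t; apply: crefl.
- move=> a c r r' ha hc [h|[h|[]]] //; apply: cstep => //; first [by left | by right; left].
- by move=> t t' _ IH; apply: csym.
- by move=> t t' t'' _ IH1 _ IH2; apply: ctrans IH2.
Qed.

Lemma W1 b n i t t' : i <= n -> ceqv b n t t' ->
  (zetaL i t).2 = (zetaL i t').2 /\ ceqv b n.+1 (zetaL i t).1 (zetaL i t').1.
Proof.
move=> hi H; elim: H i hi => {t t'}.
- by move=> t i hi; split => //; apply: crefl.
- move=> a c r r' ha hc hrr i hi.
  rewrite !zetaL_cat.
  have [hu hi1] := zetaL_valid hi ha.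
  have [e1 e2] := C1all hi1 hrr.
  have hvr : allb n r /\ allb n r'.
    by case: hrr => [[x [y [-> [-> [hx [hy _]]]]]]|[[x [-> [-> hx]]]|[_ [x [-> [-> hx]]]]]];
       rewrite /= ?hx ?hy; split => //; apply/and3P; split => //; lia.
  have [hr1 hr2] := zetaL_valid hi1 hvr.1.
  have [hc1 hc2] := zetaL_valid hr2 hc.
  split; first by rewrite /= e1.
  by rewrite /= -e1; apply: ceqv_ctx.
- by move=> t t' _ IH i hi; have [e1 e2] := IH i hi; split => //; apply: csym.
- move=> t t' t'' _ IH1 _ IH2 i hi; have [e1 e2] := IH1 i hi; have [e3 e4] := IH2 i hi.
  by split; [rewrite e1 | apply: ctrans e4].
Qed.

Lemma W2 b m rs t t' : dvalid_s m (rev rs) -> ceqv b m t t' ->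
  (zetaR rs t).2 = (zetaR rs t').2 /\ ceqv b (m + size rs) (zetaR rs t).1 (zetaR rs t').1.
Proof.
elim: rs m t t' => [|i rs IH] m t t' /=; first by rewrite addn0.
rewrite rev_cons dvalid_s_rcons => /andP[hi hrs] H.
have [e1 e2] := W1 hi H.
case: (zetaL i t) e1 e2 => u i1; case: (zetaL i t') => u' i1' /= e1 e2; subst i1'.
have [e3 e4] := IH _ _ _ hrs e2.
case: (zetaR rs u) e3 e4 => T S; case: (zetaR rs u') => T' S' /= e3 e4; subst S'.
by split => //; rewrite addnS -addSn.
Qed.

End ZetaProps.
Section DEqv.
Local Open Scope nat_scope.

Inductive deqv (b : bool) (m : nat) : seq nat -> seq nat -> Prop :=
| drefl s : deqv b m s s
| dstep a c p q : dvalid_s m c -> dvalid_s (m + size c).+2 a -> dr b (m + size c) p q ->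
    deqv b m (a ++ p ++ c) (a ++ q ++ c)
| dsym s s' : deqv b m s s' -> deqv b m s' s
| dtrans s s' s'' : deqv b m s s' -> deqv b m s' s'' -> deqv b m s s''.

Lemma dr_size b N p q : dr b N p q -> size p = 2 /\ size q = 2.
Proof. by case=> x [y [-> [-> _]]]. Qed.

Lemma deqv_size b m s s' : deqv b m s s' -> size s = size s'.
Proof.
elim => // {s s'}.
- by move=> a c p q _ _ /dr_size [h1 h2]; rewrite !size_cat h1 h2.
all: try by move=> s s' _ ->.
all: by move=> s s' s'' _ -> _ ->.
Qed.

Lemma deqv_ctx b N m x y a c : deqv b N x y -> dvalid_s m c -> N = m + size c ->
  dvalid_s (N + size x) a -> deqv b m (a ++ x ++ c) (a ++ y ++ c).
Proof.
move=> H hc hN; elim: H a => {x y}.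
- by move=> s a _; apply: drefl.
- move=> a0 c0 p q h1 h2 h3 a ha.
  have -> : a ++ (a0 ++ p ++ c0) ++ c = (a ++ a0) ++ p ++ (c0 ++ c) by rewrite !catA.
  have -> : a ++ (a0 ++ q ++ c0) ++ c = (a ++ a0) ++ q ++ (c0 ++ c) by rewrite !catA.
  have [sp sq] := dr_size h3.
  have e : m + size (c0 ++ c) = N + size c0 by rewrite size_cat hN; lia.
  apply: dstep; rewrite ?e //.
    by rewrite dvalid_s_cat hc -hN h1.
  rewrite dvalid_s_cat h2 andbT.
  by move: ha; rewrite !size_cat sp; congr (dvalid_s _ _); lia.
- by move=> s s' H IH a ha; apply: dsym; apply: IH; rewrite (deqv_size H).
- move=> s s' s'' H1 IH1 H2 IH2 a ha; apply: dtrans (IH1 a ha) (IH2 a _).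
  by rewrite -(deqv_size H1).
Qed.

Lemma zetaR_nil rs : zetaR rs [::] = ([::], rev rs).
Proof.
elim: rs => [|i rs IH] //=; rewrite IH /=; by rewrite rev_cons.
Qed.

Lemma C2gen_dr b N p q t : dr b N p q -> allb N t ->
  ceqv false N.+2 (zetaR (rev p) t).1 (zetaR (rev q) t).1 /\
  deqv b N (zetaR (rev p) t).2 (zetaR (rev q) t).2.
Proof.
elim: t p q => [|k t IH] p q hpq ht.
  rewrite !zetaR_nil /= !revK; split; first exact: crefl.
  have := @dstep b N [::] [::] p q isT isT; rewrite addn0 /= !cats0; exact.
move: ht => /= /andP[hk ht].
have hvp : dvalid_s N (rev (rev p)) /\ dvalid_s N (rev (rev q)).
  by case: hpq => x [y [-> [-> [hxy hy]]]]; rewrite !revK /=; case: (b) hxy => ?;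
     split; apply/and3P; split => //; lia.
have hk1 : allb N [:: k] by rewrite /= hk.
have [c1 [v1 s1]] := zetaR_valid hvp.1 hk1.
have [c2 [v2 s2]] := zetaR_valid hvp.2 hk1.
have [C1 R1] := C2 hpq hk.
rewrite -[k :: t]/([:: k] ++ t) !zetaR_catc.
move: c1 v1 s1 c2 v2 s2 C1 R1.
case: (zetaR (rev p) [:: k]) => T1 P1; case: (zetaR (rev q) [:: k]) => T2 Q1 /=.
rewrite !size_rev => c1 v1 s1 c2 v2 s2 C1 R1.
have hv1 : dvalid_s N (rev (rev P1)) by rewrite revK.
have [d1 _] := zetaR_valid hv1 ht.
have [sp sq] := dr_size hpq.
rewrite size_rev s1 sp addn2 in d1.
rewrite sq addn2 in c2.
case: R1 => [<-|[R1|R1]].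
- split; last exact: drefl.
  by apply: ceqv_cat => //; exact: crefl.
- have [E1 E2] := IH _ _ R1 ht; split => //.
  by apply: ceqv_cat.
- have [E1 E2] := IH _ _ R1 ht; split; last exact: dsym.
  apply: ceqv_cat => //; exact: csym.
Qed.

Lemma W3 bc bd m s s' t : deqv bd m s s' -> allb m t ->
  ceqv bc (m + size s) (zetaR (rev s) t).1 (zetaR (rev s') t).1 /\
  deqv bd m (zetaR (rev s) t).2 (zetaR (rev s') t).2.
Proof.
move=> H ht; elim: H => {s s'}.
- by move=> s; split; [apply: crefl | apply: drefl].
- move=> a c p q hc ha hpq.
  rewrite !rev_cat !zetaR_catd.
  have hvc : dvalid_s m (rev (rev c)) by rewrite revK.
  have [v1 [v2 v3]] := zetaR_valid hvc ht.
  rewrite size_rev in v1 v3.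
  have [E1 E2] := C2gen_dr hpq v1.
  have [sp sq] := dr_size hpq.
  have hva : dvalid_s (m + size c).+2 (rev (rev a)) by rewrite revK.
  have [E3 E4] := W2 hva E1.
  have hvp : dvalid_s (m + size c) (rev (rev p)).
    by case: hpq => x [y [-> [_ [hxy hy]]]]; rewrite revK /=; case: (bd) hxy => ?;
       apply/and3P; split => //; lia.
  have [w1 [w2 w3]] := zetaR_valid hvp v1.
  rewrite size_rev sp addn2 in w1.
  have [u1 [u2 u3]] := zetaR_valid hva w1.
  split.
    apply: ceqv_mono.
    by move: E4; rewrite !size_cat size_rev sp; congr (ceqv _ _ _ _); lia.
  rewrite /= -E3; apply: (deqv_ctx E2 v2) => //.
  by rewrite v3.
  by rewrite w3 size_rev sp addn2.
- by move=> s s' H [E1 E2]; rewrite -(deqv_size H); split; [apply: csym | apply: dsym].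
- move=> s s' s'' H1 [E1 E2] H2 [E3 E4]; split; last exact: dtrans E4.
  by apply: ctrans E1 _; rewrite (deqv_size H1).
Qed.

End DEqv.
Import GRing.Theory.
Section Vec.
Local Open Scope ring_scope.
Variable k : fieldType.

Lemma mkU_scale (X : choiceType) (c a : k) (z : X) :
  << c * a *g z >> = c *: << a *g z >> :> {malg k[X]}.
Proof. by apply/malgP => w; rewrite mcoeffZ !mcoeffU mulrnAr. Qed.

Lemma span_add (V : lmodType k) (T : V -> Prop) u v : span T u -> span T v -> span T (u + v).
Proof.
elim => [|c s v1 hs _ IH] hv; first by rewrite add0r.
by rewrite -addrA; apply: spanS => //; apply: IH.
Qed.

Lemma span_scale (V : lmodType k) (T : V -> Prop) d u : span T u -> span T (d *: u).
Proof.
elim => [|c s v1 hs _ IH]; first by rewrite scaler0; apply: span0.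
by rewrite scalerDr scalerA; apply: spanS.
Qed.

Lemma span_gen (V : lmodType k) (T : V -> Prop) u : T u -> span T u.
Proof. by move=> h; have := spanS 1 h (span0 T); rewrite scale1r addr0. Qed.

Lemma span_opp (V : lmodType k) (T : V -> Prop) u : span T u -> span T (- u).
Proof. by move=> h; rewrite -scaleN1r; apply: span_scale. Qed.

Lemma span_sub (V : lmodType k) (T : V -> Prop) u v : span T u -> span T v -> span T (u - v).
Proof. by move=> h1 h2; apply: span_add h1 (span_opp h2). Qed.

Lemma span_eq (V : lmodType k) (T : V -> Prop) u v : u = v -> span T u -> span T v.
Proof. by move=> ->. Qed.

Definition islin (V W : lmodType k) (F : V -> W) := forall c p q, F (c *: p + q) = c *: F p + F q.

Section IsLin.
Variables (V W U : lmodType k) (F : V -> W) (hF : islin F).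
Lemma islin0 : F 0 = 0.
Proof.
have h := hF 1 0 0; rewrite scaler0 addr0 scale1r in h.
by apply: (@addrI _ (F 0)); rewrite addr0 -h.
Qed.
Lemma islinZ c p : F (c *: p) = c *: F p.
Proof. by have := hF c p 0; rewrite addr0 islin0 addr0. Qed.
Lemma islinD p q : F (p + q) = F p + F q.
Proof. by have := hF 1 p q; rewrite !scale1r. Qed.
Lemma islinN p : F (- p) = - F p.
Proof. by rewrite -scaleN1r islinZ scaleN1r. Qed.
Lemma islinB p q : F (p - q) = F p - F q.
Proof. by rewrite islinD islinN. Qed.
Lemma islin_sum (I : Type) (s : seq I) (G : I -> V) :
  F (\sum_(i <- s) G i) = \sum_(i <- s) F (G i).
Proof. by elim: s => [|i s IH]; rewrite ?big_nil ?islin0 // !big_cons islinD IH. Qed.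
Lemma islin_comp (H : W -> U) : islin H -> islin (H \o F).
Proof. by move=> hH c p q /=; rewrite hF hH. Qed.
End IsLin.

Lemma span_ind_lin (V W : lmodType k) (F : V -> W) (T : V -> Prop) (U : W -> Prop) x :
  islin F -> (forall s, T s -> span U (F s)) -> span T x -> span U (F x).
Proof.
move=> hF hT; elim => [|c s v hs _ IH]; first by rewrite islin0 //; apply: span0.
by rewrite hF; apply: span_add => //; apply: span_scale; apply: hT.
Qed.

Lemma lin_expand (X : choiceType) (W : lmodType k) (F : {malg k[X]} -> W) p :
  islin F -> F p = \sum_(x <- msupp p) p@_x *: F << x >>.
Proof.
move=> hF; rewrite {1}(monalgE p) islin_sum //; apply: eq_bigr => x _.
by rewrite -(mulr1 p@_x) mkU_scale islinZ // mulr1.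
Qed.

Lemma lin_closed (X : choiceType) (W : lmodType k) (F : {malg k[X]} -> W) (U : W -> Prop) p :
  islin F -> (forall x, x \in msupp p -> span U (F << x >>)) -> span U (F p).
Proof.
move=> hF hx; rewrite lin_expand //; rewrite big_seq; elim/big_rec: _ => [|x v hxs hv].
  exact: span0.
by apply: span_add => //; apply: span_scale; apply: hx.
Qed.

Lemma linEw (X Y : choiceType) (f : X -> Y) (p : {malg k[X]}) (d : {fset X}) :
  (msupp p `<=` d)%fset -> lin f p = \sum_(x <- d) << p@_x *g f x >>.
Proof.
move=> le; rewrite /lin (big_fset_incl _ le) // => x _ /mcoeff_outdom ->.
by rewrite monalgU0.
Qed.

Lemma lin_islin (X Y : choiceType) (f : X -> Y) : islin (lin (k := k) f).
Proof.
move=> c p q.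
have le1 : (msupp (c *: p + q) `<=` msupp p `|` msupp q)%fset.
  apply: fsubset_trans (msuppD_le _ _) _; apply: fsetSU; exact: msuppZ_le.
rewrite (linEw _ le1) (linEw _ (fsubsetUl (msupp p) (msupp q))).
rewrite (linEw _ (fsubsetUr (msupp p) (msupp q))) scaler_sumr -big_split /=.
apply: eq_bigr => x _; by rewrite mcoeffD mcoeffZ monalgUD mkU_scale.
Qed.

Lemma linU (X Y : choiceType) (f : X -> Y) x : lin (k := k) f << x >> = << f x >>.
Proof. by rewrite /lin msuppU oner_eq0 big_seq_fset1 mcoeffUU. Qed.

Lemma lin_comp (X Y Z : choiceType) (f : Y -> Z) (g : X -> Y) p :
  lin (k := k) f (lin g p) = lin (f \o g) p.
Proof.
have h1 := @lin_expand _ _ (lin f \o lin g) p (islin_comp (lin_islin g) (lin_islin f)).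
rewrite /= in h1; rewrite h1 (lin_expand (F := lin (f \o g))); last exact: lin_islin.
by apply: eq_bigr => x _ /=; rewrite !linU.
Qed.

Lemma eq_lin_in (X Y : choiceType) (f g : X -> Y) p :
  (forall x, x \in msupp p -> f x = g x) -> lin (k := k) f p = lin g p.
Proof. by move=> h; rewrite /lin big_seq [RHS]big_seq; apply: eq_bigr => x /h ->. Qed.

Lemma bilEw (X Y Z : choiceType) (f : X -> Y -> option Z) p q (d1 : {fset X}) (d2 : {fset Y}) :
  (msupp p `<=` d1)%fset -> (msupp q `<=` d2)%fset ->
  bil (k := k) f p q = \sum_(x <- d1) \sum_(y <- d2) oapp (fun z => << p@_x * q@_y *g z >>) 0 (f x y).
Proof.
move=> le1 le2; rewrite /bil (big_fset_incl _ le1) => [|x _ /mcoeff_outdom ->].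
  apply: eq_bigr => x _; rewrite (big_fset_incl _ le2) // => y _ /mcoeff_outdom ->.
  by case: (f x y) => //= z; rewrite mulr0 monalgU0.
by apply: big1 => y _; case: (f x y) => //= z; rewrite mul0r monalgU0.
Qed.

Lemma bil_islin1 (X Y Z : choiceType) (f : X -> Y -> option Z) q :
  islin (fun p => bil (k := k) f p q).
Proof.
move=> c p p' /=.
have le1 : (msupp (c *: p + p') `<=` msupp p `|` msupp p')%fset.
  apply: fsubset_trans (msuppD_le _ _) _; apply: fsetSU; exact: msuppZ_le.
rewrite (bilEw _ le1 (fsubset_refl _)) (bilEw _ (fsubsetUl (msupp p) (msupp p')) (fsubset_refl _)).
rewrite (bilEw _ (fsubsetUr (msupp p) (msupp p')) (fsubset_refl _)) scaler_sumr -big_split /=.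
apply: eq_bigr => x _; rewrite scaler_sumr -big_split /=; apply: eq_bigr => y _.
case: (f x y) => [z|] /=; last by rewrite scaler0 addr0.
by rewrite mcoeffD mcoeffZ mulrDl monalgUD -mulrA mkU_scale.
Qed.

Lemma bil_islin2 (X Y Z : choiceType) (f : X -> Y -> option Z) p :
  islin (fun q => bil (k := k) f p q).
Proof.
move=> c q q' /=.
have le1 : (msupp (c *: q + q') `<=` msupp q `|` msupp q')%fset.
  apply: fsubset_trans (msuppD_le _ _) _; apply: fsetSU; exact: msuppZ_le.
rewrite (bilEw _ (fsubset_refl _) le1) (bilEw _ (fsubset_refl _) (fsubsetUl (msupp q) (msupp q'))).
rewrite (bilEw _ (fsubset_refl _) (fsubsetUr (msupp q) (msupp q'))) scaler_sumr -big_split /=.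
apply: eq_bigr => x _; rewrite scaler_sumr -big_split /=; apply: eq_bigr => y _.
case: (f x y) => [z|] /=; last by rewrite scaler0 addr0.
rewrite mcoeffD mcoeffZ mulrDr monalgUD; congr (_ + _); rewrite mulrCA; exact: mkU_scale.
Qed.

Lemma bilUU (X Y Z : choiceType) (f : X -> Y -> option Z) x y :
  bil (k := k) f << x >> << y >> = oapp (fun z => << z >>) 0 (f x y).
Proof. by rewrite /bil !msuppU oner_eq0 !big_seq_fset1 !mcoeffUU mulr1. Qed.

Lemma msupp_sum (X : choiceType) (I : eqType) (s : seq I) (G : I -> {malg k[X]}) z :
  z \in msupp (\sum_(i <- s) G i) -> exists2 i, i \in s & z \in msupp (G i).
Proof.
elim: s => [|i s IH]; first by rewrite big_nil msupp0 inE.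
rewrite big_cons => /(fsubsetP (msuppD_le _ _)); rewrite inE => /orP[h|/IH [j hj hz]].
  by exists i => //; rewrite inE eqxx.
by exists j => //; rewrite inE hj orbT.
Qed.

Lemma bil_supp (X Y Z : choiceType) (f : X -> Y -> option Z) p q z :
  z \in msupp (bil (k := k) f p q) ->
  exists x y, [/\ x \in msupp p, y \in msupp q & f x y = Some z].
Proof.
move=> /msupp_sum [x hx] /msupp_sum [y hy].
case E: (f x y) => [z'|] /=; last by rewrite msupp0 inE.
by move/(fsubsetP msuppU_le); rewrite inE => /eqP ->; exists x, y.
Qed.

Lemma lin_supp (X Y : choiceType) (f : X -> Y) p z :
  z \in msupp (lin (k := k) f p) -> exists2 x, x \in msupp p & z = f x.
Proof.
move=> /msupp_sum [x hx] /(fsubsetP msuppU_le); rewrite inE => /eqP ->.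
by exists x.
Qed.

Lemma supp_closed (X : choiceType) (T : {malg k[X]} -> Prop) (P : X -> Prop) v :
  (forall s, T s -> forall z, z \in msupp s -> P z) -> span T v ->
  forall z, z \in msupp v -> P z.
Proof.
move=> hT; elim => [|c s v1 hs _ IH] z; first by rewrite msupp0 inE.
move=> /(fsubsetP (msuppD_le _ _)); rewrite inE => /orP[/(fsubsetP (msuppZ_le _ _))|]; last exact: IH.
exact: hT.
Qed.

End Vec.
Import GRing.Theory.
Section Dom.
Local Open Scope ring_scope.
Variable k : fieldType.

Definition cP (b : bool) := if b then Sym else Braid.
Definition dP (b : bool) := if b then Simp else Mag.

Lemma pvalid_cP b : pvalid (cP b) = cvalid. Proof. by case: b. Qed.
Lemma ptgt_cP b : ptgt (cP b) = ctgt. Proof. by case: b. Qed.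
Lemma pvalid_dP b : pvalid (dP b) = dvalid. Proof. by case: b. Qed.
Lemma ptgt_dP b : ptgt (dP b) = dtgt. Proof. by case: b. Qed.

Lemma cr_valid b n r r' : cr b n r r' -> allb n r && allb n r'.
Proof.
case=> [[x [y [-> [-> [hx [hy _]]]]]]|[[x [-> [-> hx]]]|[_ [x [-> [-> hx]]]]]] /=;
  rewrite ?andbT; repeat (apply/andP; split); lia.
Qed.

Lemma dr_valid b n s s' : dr b n s s' -> dvalid_s n s && dvalid_s n s'.
Proof.
case=> x [y [-> [-> [hxy hy]]]] /=; case: (b) hxy => ? /=; rewrite !addn1 !addn0;
  repeat (apply/andP; split); lia.
Qed.

Lemma braid_cr b p q : braid_rel p q -> p.1 = q.1 /\ cr b p.1 p.2 q.2.
Proof.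
case=> [[n [i [j [hi [hj [hd [-> ->]]]]]]]|[n [i [hi [-> ->]]]]].
  by split => //; left; exists i, j; do !split => //; lia.
by split => //; right; left; exists i.
Qed.

Lemma cP_rel b p q : prel (cP b) p q -> p.1 = q.1 /\ cr b p.1 p.2 q.2.
Proof.
case: b => /=; last exact: braid_cr.
case=> [/(braid_cr true) //|[n [i [hi [-> ->]]]]].
by split => //; right; right; split => //; exists i.
Qed.

Lemma cP_rel' b n r r' : cr b n r r' -> prel (cP b) (n, r) (n, r').
Proof.
case=> [[x [y [-> [-> [hx [hy hd]]]]]]|[[x [-> [-> hx]]]|[hb [x [-> [-> hx]]]]]].
- have h : braid_rel (n, [:: x; y]) (n, [:: y; x]).
    by left; exists n, x, y; do !split => //; lia.
  by case: b => //=; left.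
- have h : braid_rel (n, [:: x; x.+1; x]) (n, [:: x.+1; x; x.+1]) by right; exists n, x.
  by case: b => //=; left.
- by move: hb; case: b => // _ /=; right; exists n, x.
Qed.

Lemma dP_rel b p q : prel (dP b) p q -> p.1 = q.1 /\ dr b p.1 p.2 q.2.
Proof.
case: b => /= [[n [i [j [/andP[h1 h2] [-> ->]]]]]|[n [i [j [/andP[h1 h2] [-> ->]]]]]];
  by split => //; exists i, j.
Qed.

Lemma dP_rel' b n s s' : dr b n s s' -> prel (dP b) (n, s) (n, s').
Proof.
case=> x [y [-> [-> [hxy hy]]]]; case: b hxy => /= hxy; exists n, x, y; by rewrite hxy hy.
Qed.

Lemma amulUU P x y :
  amul (k := k) P << x >> << y >> = if x.1 == ptgt P y then << wcat x y >> else 0.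
Proof. by rewrite /amul bilUU; case: ifP. Qed.

Lemma tprodUU P Q x y :
  tprod (k := k) P Q << x >> << y >> = if x.1 == ptgt Q y then << (x, y) >> else 0.
Proof. by rewrite /tprod bilUU; case: ifP. Qed.

Lemma zetaU (z : word * word) : zeta (k := k) << z >> = << zetab z >>.
Proof. exact: linU. Qed.

Lemma amul_islin1 P b : islin (fun a => amul (k := k) P a b).
Proof. exact: bil_islin1. Qed.
Lemma amul_islin2 P a : islin (fun b => amul (k := k) P a b).
Proof. exact: bil_islin2. Qed.
Lemma tprod_islin1 P Q b : islin (fun a => tprod (k := k) P Q a b).
Proof. exact: bil_islin1. Qed.
Lemma tprod_islin2 P Q a : islin (fun b => tprod (k := k) P Q a b).
Proof. exact: bil_islin2. Qed.
Lemma zeta_islin : islin (zeta (k := k)).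
Proof. exact: lin_islin. Qed.

Lemma vvalidU P x : pvalid P x -> vvalid (k := k) P << x >>.
Proof. by move=> h z; rewrite msuppU oner_eq0 inE => /eqP ->. Qed.

Lemma ceqv_ideal b n t t' : ceqv b n t t' ->
  ideal (k := k) (cP b) (<< (n, t) >> - << (n, t') >>).
Proof.
elim => {t t'}.
- by move=> t; rewrite subrr; apply: span0.
- move=> a c r r' ha hc hr; apply: span_gen.
  have /andP[v1 v2] := cr_valid hr.
  exists << (n, a) >>, << (n, c) >>, (n, r), (n, r').
  rewrite !pvalid_cP; do !split => //; try (apply: vvalidU; rewrite pvalid_cP //).
    exact: cP_rel'.
  rewrite (islinB (amul_islin2 _ _)) !amulUU ptgt_cP /ctgt /= eqxx.
  by rewrite (islinB (amul_islin1 _ _)) !amulUU ptgt_cP /ctgt /= eqxx /wcat /= !catA.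
- by move=> t t' _ h; rewrite -opprB; apply: span_opp.
- move=> t t' t'' _ h1 _ h2.
  by have := span_add h1 h2; rewrite addrA subrK.
Qed.

Lemma deqv_ideal b m s s' : deqv b m s s' ->
  ideal (k := k) (dP b) (<< (m, s) >> - << (m, s') >>).
Proof.
elim => {s s'}.
- by move=> s; rewrite subrr; apply: span0.
- move=> a c p q hc ha hr; apply: span_gen.
  have /andP[v1 v2] := dr_valid hr.
  have [sp sq] := dr_size hr.
  exists << ((m + size c).+2, a) >>, << (m, c) >>, (m + size c, p), (m + size c, q).
  rewrite !pvalid_dP; do !split => //; try (apply: vvalidU; rewrite pvalid_dP //).
    exact: dP_rel'.
  rewrite (islinB (amul_islin2 _ _)) !amulUU ptgt_dP /dtgt /= sp sq addn2 eqxx.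
  by rewrite (islinB (amul_islin1 _ _)) !amulUU ptgt_dP /dtgt /= eqxx /wcat /= !catA.
- by move=> t t' _ h; rewrite -opprB; apply: span_opp.
- move=> t t' t'' _ h1 _ h2.
  by have := span_add h1 h2; rewrite addrA subrK.
Qed.

Lemma pair_ker2 bc bd L m c1 c2 s1 s2 :
  ceqv bc L c1 c2 -> deqv bd m s1 s2 -> allb L c2 -> dvalid_s m s1 ->
  L = (m + size s1)%N -> size s1 = size s2 ->
  ker2 (k := k) (cP bc) (dP bd) (<< ((L, c1), (m, s1)) >> - << ((L, c2), (m, s2)) >>).
Proof.
move=> hc hd v1 v2 hL hs.
have -> : << ((L, c1), (m, s1)) >> - << ((L, c2), (m, s2)) >> =
   tprod (k := k) (cP bc) (dP bd) (<< (L, c1) >> - << (L, c2) >>) << (m, s1) >> +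
   tprod (k := k) (cP bc) (dP bd) << (L, c2) >> (<< (m, s1) >> - << (m, s2) >>).
  rewrite (islinB (tprod_islin1 _ _ _)) (islinB (tprod_islin2 _ _ _)) !tprodUU ptgt_dP /dtgt /=.
  by rewrite -hs -hL eqxx addrA subrK.
apply: span_add; apply: span_gen.
  exists (<< (L, c1) >> - << (L, c2) >>), << (m, s1) >>; split => //; left; split.
    exact: ceqv_ideal.
  by apply: vvalidU; rewrite pvalid_dP.
exists << (L, c2) >>, (<< (m, s1) >> - << (m, s2) >>); split => //; right; split.
  by apply: vvalidU; rewrite pvalid_cP.
exact: deqv_ideal.
Qed.

End Dom.
Section Words.
Local Open Scope nat_scope.

Lemma addRn (a b : nat) : (a + b)%R = a + b. Proof. by []. Qed.

Lemma zetaR_size rs t : size (zetaR rs t).2 = size rs.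
Proof.
elim: rs t => [|i rs IH] t //=; case: zetaL => u i1; have := IH u.
by case: zetaR => T S /= h; rewrite size_rcons h.
Qed.

Lemma cond2_word (x y z : word) : x.1 = dtgt y ->
  zetab (mul_l ((x, y), z)) = mul_r (zeta_l (zeta_r ((x, y), z))).
Proof.
case: x => xm xs; case: y => ym ys; case: z => zm zs; rewrite /dtgt /= => ->.
rewrite /zetab /= rev_cat zetaR_catd.
case: (zetaR (rev ys) zs) => t1 s1 /=.
case: (zetaR (rev xs) t1) => t2 s2 /=.
by rewrite !addRn size_cat /wcat /= [size xs + _]addnC addnA.
Qed.

Lemma cond3_word (x y z : word) :
  zetab (mul_r ((x, y), z)) = mul_l (zeta_r (zeta_l ((x, y), z))).
Proof.
case: x => xm xs; case: y => ym ys; case: z => zm zs.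
rewrite /zetab /= zetaR_catc.
have := zetaR_size (rev xs) ys.
case: (zetaR (rev xs) ys) => t1 s1 /= hs.
case: (zetaR (rev s1) zs) => t2 s2 /=.
by rewrite !addRn hs size_rev.
Qed.

End Words.

Section Main.
Local Open Scope ring_scope.
Variable k : fieldType.

Lemma tprod_supp P Q a b z : z \in msupp (tprod (k := k) P Q a b) ->
  [/\ z.1 \in msupp a, z.2 \in msupp b & z.1.1 = ptgt Q z.2].
Proof.
move=> /bil_supp [x [y [hx hy]]]; case: eqP => // e [<-]; by split.
Qed.

Lemma tprod3_supp P Q R a b c z : z \in msupp (tprod3 (k := k) P Q R a b c) ->
  [/\ z.1.1.1 = ptgt Q z.1.2, z.1.2.1 = ptgt R z.2 & (z.1.1 \in msupp a) && (z.1.2 \in msupp b)].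
Proof.
move=> /bil_supp [x [y [hx hy]]]; case: eqP => // e [<-] /=.
have [h1 h2 h3] := tprod_supp hx.
by split => //; rewrite h1 h2.
Qed.

Lemma cond4 bc bd (b : vec k) :
  ker2 (cP bc) (dP bd) (zeta (lin (fun x : word => (x, (x.1, [::]) : word)) b)
               - lin (fun x : word => ((ptgt (dP bd) x, [::]) : word, x)) b).
Proof.
rewrite /zeta lin_comp (eq_lin_in (g := fun x : word => ((ptgt (dP bd) x, [::]) : word, x))).
  by rewrite subrr; apply: span0.
move=> [m s] _; rewrite ptgt_dP /dtgt /zetab /= zetaR_nil revK; done.
Qed.

Lemma cond5 bc bd (a : vec k) :
  ker2 (cP bc) (dP bd) (zeta (lin (fun y : word => ((ptgt (cP bc) y, [::]) : word, y)) a)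
               - lin (fun y : word => (y, (y.1, [::]) : word)) a).
Proof.
rewrite /zeta lin_comp (eq_lin_in (g := fun y : word => (y, (y.1, [::]) : word))).
  by rewrite subrr; apply: span0.
move=> [m s] _; rewrite ptgt_cP /ctgt /zetab /= addr0; done.
Qed.

Lemma cond2 bc bd (x : vec3 k) : tens3 (dP bd) (dP bd) (cP bc) x ->
  ker2 (cP bc) (dP bd) (zeta (lin mul_l x) - lin mul_r (lin zeta_l (lin zeta_r x))).
Proof.
move=> hx; rewrite /zeta !lin_comp (eq_lin_in (g := mul_r \o (zeta_l \o zeta_r))).
  by rewrite subrr; apply: span0.
move=> [[u v] w] hz /=.
have : u.1 = dtgt v.
  apply: (supp_closed (P := fun z : (word * word) * word => z.1.1.1 = dtgt z.1.2) _ hx hz).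
  move=> s [a [b [c [_ [_ [_ ->]]]]]] z /tprod3_supp [h _ _]; by rewrite h ptgt_dP.
exact: cond2_word.
Qed.

Lemma cond3 bc bd (x : vec3 k) : tens3 (dP bd) (cP bc) (cP bc) x ->
  ker2 (cP bc) (dP bd) (zeta (lin mul_r x) - lin mul_l (lin zeta_r (lin zeta_l x))).
Proof.
move=> _; rewrite /zeta !lin_comp (eq_lin_in (g := mul_l \o (zeta_r \o zeta_l))).
  by rewrite subrr; apply: span0.
move=> [[u v] w] _ /=; exact: cond3_word.
Qed.

End Main.
Section Cond1.
Local Open Scope ring_scope.
Variable k : fieldType.

Lemma amulL P c p q b : amul (k := k) P (c *: p + q) b = c *: amul P p b + amul P q b.
Proof. exact: (amul_islin1 P b). Qed.
Lemma amulR P c a p q : amul (k := k) P a (c *: p + q) = c *: amul P a p + amul P a q.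
Proof. exact: (amul_islin2 P a). Qed.
Lemma tprodL P Q c p q b : tprod (k := k) P Q (c *: p + q) b = c *: tprod P Q p b + tprod P Q q b.
Proof. exact: (tprod_islin1 P Q b). Qed.
Lemma tprodR P Q c a p q : tprod (k := k) P Q a (c *: p + q) = c *: tprod P Q a p + tprod P Q a q.
Proof. exact: (tprod_islin2 P Q a). Qed.
Lemma zetaLin c p q : zeta (k := k) (c *: p + q) = c *: zeta p + zeta q.
Proof. exact: zeta_islin. Qed.

Lemma gen_d_word bc bd (x y w : word) n ps qs :
  dvalid x -> dvalid y -> cvalid w -> dr bd n ps qs ->
  x.1 = (n + 2)%N -> n = dtgt y -> y.1 = w.1 ->
  ker2 (k := k) (cP bc) (dP bd)
    (<< zetab (wcat (wcat x (n, ps)) y, w) >> - << zetab (wcat (wcat x (n, qs)) y, w) >>).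
Proof.
case: x => xm xs; case: y => ym ys; case: w => wm ws.
rewrite /dvalid /cvalid /dtgt /= => hx hy hw hr e1 e2 e3; subst wm n.
have [sp sq] := dr_size hr.
have D : deqv bd ym (xs ++ ps ++ ys) (xs ++ qs ++ ys).
  apply: dstep => //; by rewrite -addn2 -e1.
have [E1 E2] := W3 bc D hw.
have /andP[vp vq] := dr_valid hr.
have hvq : dvalid_s ym (rev (rev (xs ++ qs ++ ys))).
  rewrite revK !dvalid_s_cat hy vq /= andbT size_cat sq.
  by have -> : (ym + (2 + size ys))%N = xm by lia.
have hvp : dvalid_s ym (rev (rev (xs ++ ps ++ ys))).
  rewrite revK !dvalid_s_cat hy vp /= andbT size_cat sp.
  by have -> : (ym + (2 + size ys))%N = xm by lia.
have [a1 _] := zetaR_valid hvq hw.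
have [_ [a2 a3]] := zetaR_valid hvp hw.
have hsz : size (xs ++ qs ++ ys) = size (xs ++ ps ++ ys) by rewrite !size_cat sp sq.
rewrite /zetab /wcat /= -!catA.
move: E1 E2 a1 a2 a3; rewrite size_rev hsz.
have := zetaR_size (rev (xs ++ qs ++ ys)) ws.
case: (zetaR (rev (xs ++ ps ++ ys)) ws) => Tp Sp; case: (zetaR (rev (xs ++ qs ++ ys)) ws) => Tq Sq /=.
rewrite !size_rev hsz => s2 E1 E2 a1 a2 a3.
apply: pair_ker2 => //; by rewrite ?a3 ?s2.
Qed.

Lemma gen_c_word bc bd (x u v : word) n rs rs' :
  dvalid x -> cvalid u -> cvalid v -> cr bc n rs rs' ->
  u.1 = n -> n = v.1 -> x.1 = v.1 ->
  ker2 (k := k) (cP bc) (dP bd)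
    (<< zetab (x, wcat (wcat u (n, rs)) v) >> - << zetab (x, wcat (wcat u (n, rs')) v) >>).
Proof.
case: x => xm xs; case: u => um us; case: v => vm vs.
rewrite /dvalid /cvalid /= => hx hu hv hr e1 e2 e3; subst um n xm.
have C : ceqv bc vm (us ++ rs ++ vs) (us ++ rs' ++ vs) by apply: cstep.
have hvx : dvalid_s vm (rev (rev xs)) by rewrite revK.
have [E1 E2] := W2 hvx C.
have /andP[vr vr'] := cr_valid hr.
have hw' : allb vm (us ++ rs' ++ vs) by rewrite !all_cat hu vr' hv.
have hw : allb vm (us ++ rs ++ vs) by rewrite !all_cat hu vr hv.
have [a1 _] := zetaR_valid hvx hw'.
have [_ [a2 a3]] := zetaR_valid hvx hw.
rewrite /zetab /wcat /= -!catA.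
move: E1 E2 a1 a2 a3.
case: (zetaR (rev xs) (us ++ rs ++ vs)) => Tp Sp; case: (zetaR (rev xs) (us ++ rs' ++ vs)) => Tq Sq /=.
move=> E1 E2 a1 a2 a3; subst Sq.
apply: pair_ker2 => //; try exact: drefl.
  by rewrite size_rev in E2.
by rewrite size_rev in a1.
by rewrite a3 size_rev.
Qed.

Lemma zero_ker2 bc bd : ker2 (k := k) (cP bc) (dP bd) 0.
Proof. exact: span0. Qed.

Lemma amul0l P b : amul (k := k) P 0 b = 0.
Proof. exact: (islin0 (amul_islin1 P b)). Qed.
Lemma tprod0l P Q b : tprod (k := k) P Q 0 b = 0.
Proof. exact: (islin0 (tprod_islin1 P Q b)). Qed.
Lemma tprod0r P Q a : tprod (k := k) P Q a 0 = 0.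
Proof. exact: (islin0 (tprod_islin2 P Q a)). Qed.
Lemma zeta0 : zeta (k := k) 0 = 0.
Proof. exact: (islin0 (@zeta_islin k)). Qed.
Lemma amulB1 P p q b : amul (k := k) P (p - q) b = amul P p b - amul P q b.
Proof. exact: (islinB (amul_islin1 P b)). Qed.
Lemma amulB2 P a p q : amul (k := k) P a (p - q) = amul P a p - amul P a q.
Proof. exact: (islinB (amul_islin2 P a)). Qed.
Lemma tprodB1 P Q p q b : tprod (k := k) P Q (p - q) b = tprod P Q p b - tprod P Q q b.
Proof. exact: (islinB (tprod_islin1 P Q b)). Qed.
Lemma tprodB2 P Q a p q : tprod (k := k) P Q a (p - q) = tprod P Q a p - tprod P Q a q.
Proof. exact: (islinB (tprod_islin2 P Q a)). Qed.
Lemma zetaB p q : zeta (k := k) (p - q) = zeta p - zeta q.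
Proof. exact: (islinB (@zeta_islin k)). Qed.

Lemma gen_d bc bd (x y w : word) p q :
  dvalid x -> dvalid y -> cvalid w -> prel (dP bd) p q ->
  ker2 (k := k) (cP bc) (dP bd) (zeta (tprod (dP bd) (cP bc)
     (amul (dP bd) (amul (dP bd) << x >> (<< p >> - << q >>)) << y >>) << w >>)).
Proof.
move=> hx hy hw /dP_rel [e hr].
case: p q e hr => n ps [n' qs] /= <- hr.
have [sp sq] := dr_size hr.
rewrite amulB2 !amulUU ptgt_dP /dtgt /= sp sq.
case: eqP => [hx1|_]; last by rewrite subrr amul0l tprod0l zeta0; apply: span0.
rewrite amulB1 !amulUU ptgt_dP /dtgt /wcat /=.
case: eqP => [hy1|_]; last by rewrite subrr tprod0l zeta0; apply: span0.
rewrite tprodB1 !tprodUU ptgt_cP /ctgt /=.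
case: eqP => [hw1|_]; last by rewrite subrr zeta0; apply: span0.
rewrite zetaB !zetaU.
have := @gen_d_word bc bd (x.1, x.2) y w n ps qs hx hy hw hr hx1 hy1 hw1.
by rewrite /wcat /=.
Qed.

Lemma gen_c bc bd (x u v : word) r r' :
  dvalid x -> cvalid u -> cvalid v -> prel (cP bc) r r' ->
  ker2 (k := k) (cP bc) (dP bd) (zeta (tprod (dP bd) (cP bc) << x >>
     (amul (cP bc) (amul (cP bc) << u >> (<< r >> - << r' >>)) << v >>))).
Proof.
move=> hx hu hv /cP_rel [e hr].
case: r r' e hr => n rs [n' rs'] /= <- hr.
rewrite amulB2 !amulUU ptgt_cP /ctgt /=.
case: eqP => [hu1|_]; last by rewrite subrr amul0l tprod0r zeta0; apply: span0.
rewrite amulB1 !amulUU ptgt_cP /ctgt /wcat /=.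
case: eqP => [hv1|_]; last by rewrite subrr tprod0r zeta0; apply: span0.
rewrite tprodB2 !tprodUU ptgt_cP /ctgt /=.
case: eqP => [hx1|_]; last by rewrite subrr zeta0; apply: span0.
rewrite zetaB !zetaU.
have := @gen_c_word bc bd x (u.1, u.2) v n rs rs' hx hu hv hr hu1 hv1 hx1.
by rewrite /wcat /=.
Qed.

End Cond1.
Section Final.
Local Open Scope ring_scope.
Variable k : fieldType.

Lemma cond1 bc bd (x : vec2 k) : ker2 (dP bd) (cP bc) x -> ker2 (cP bc) (dP bd) (zeta x).
Proof.
apply: (span_ind_lin (F := zeta (k := k))); first exact: zeta_islin.
move=> s [a [b [[[ha hb]|[ha hb]] ->]]].
- apply: (span_ind_lin (F := fun a => zeta (tprod (dP bd) (cP bc) a b)) _ _ ha).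
    by move=> c p q /=; rewrite tprodL zetaLin.
  move=> g [u [v [p [q [hu [hv [hp [hq [hpq ->]]]]]]]]].
  apply: (lin_closed (F := fun u => zeta (tprod (dP bd) (cP bc)
           (amul (dP bd) (amul (dP bd) u (<< p >> - << q >>)) v) b))).
    by move=> c p1 q1 /=; rewrite !amulL tprodL zetaLin.
  move=> x1 hx1.
  apply: (lin_closed (F := fun v => zeta (tprod (dP bd) (cP bc)
           (amul (dP bd) (amul (dP bd) << x1 >> (<< p >> - << q >>)) v) b))).
    by move=> c p1 q1 /=; rewrite !amulR tprodL zetaLin.
  move=> y1 hy1.
  apply: (lin_closed (F := fun b => zeta (tprod (dP bd) (cP bc)
           (amul (dP bd) (amul (dP bd) << x1 >> (<< p >> - << q >>)) << y1 >>) b))).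
    by move=> c p1 q1 /=; rewrite !tprodR zetaLin.
  move=> w1 hw1 /=.
  apply: gen_d => //.
  + by rewrite -(pvalid_dP bd); apply: hu.
  + by rewrite -(pvalid_dP bd); apply: hv.
  + by rewrite -(pvalid_cP bc); apply: hb.
- apply: (span_ind_lin (F := fun b => zeta (tprod (dP bd) (cP bc) a b)) _ _ hb).
    by move=> c p q /=; rewrite tprodR zetaLin.
  move=> g [u [v [p [q [hu [hv [hp [hq [hpq ->]]]]]]]]].
  apply: (lin_closed (F := fun a => zeta (tprod (dP bd) (cP bc) a
           (amul (cP bc) (amul (cP bc) u (<< p >> - << q >>)) v)))).
    by move=> c p1 q1 /=; rewrite !tprodL zetaLin.
  move=> x1 hx1.
  apply: (lin_closed (F := fun u => zeta (tprod (dP bd) (cP bc) << x1 >>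
           (amul (cP bc) (amul (cP bc) u (<< p >> - << q >>)) v)))).
    by move=> c p1 q1 /=; rewrite !amulL tprodR zetaLin.
  move=> y1 hy1.
  apply: (lin_closed (F := fun v => zeta (tprod (dP bd) (cP bc) << x1 >>
           (amul (cP bc) (amul (cP bc) << y1 >> (<< p >> - << q >>)) v)))).
    by move=> c p1 q1 /=; rewrite !amulR tprodR zetaLin.
  move=> w1 hw1 /=.
  apply: gen_c => //.
  + by rewrite -(pvalid_dP bd); apply: ha.
  + by rewrite -(pvalid_cP bc); apply: hu.
  + by rewrite -(pvalid_cP bc); apply: hv.
Qed.

Lemma main_desc bc bd : descends k (dP bd) (cP bc).
Proof.
split; first exact: cond1.
split; first exact: cond2.
split; first exact: cond3.
split; first by move=> b _; exact: cond4.
by move=> a _; exact: cond5.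
Qed.

End Final.

Theorem mainTheorem9 (k : fieldType) :
  descends k Mag Braid /\ descends k Simp Braid /\
  descends k Mag Sym /\ descends k Simp Sym.
Proof.
split; first exact: (main_desc k false false).
split; first exact: (main_desc k false true).
split; first exact: (main_desc k true false).
exact: (main_desc k true true).
Qed.
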